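(* Consider the discrete-time system $x_{k+1}=f(x_k,u_k,w_k)$, $y_k=h(x_k,v_k)$ with $x_k\in\mathbb{X}\subset\mathbb{R}^n$, $u_k\in\mathbb{U}\subseteq\mathbb{R}^m$, $w_k\in\mathbb{R}^q$, $v_k\in\mathbb{V}\subset\mathbb{R}^r$, $y_k\in\mathbb{Y}\subset\mathbb{R}^p$, $f,h$ continuously differentiable, $\mathbb{Z}:=\mathbb{X}\times\mathbb{U}\times\mathbb{R}^q\times\mathbb{V}\times\mathbb{Y}$. Assume $\mathbb{X},\mathbb{V},\mathbb{Y}$ are compact. Assume there is a diffeomorphism $T=(T_\flat,T_\sharp):\mathbb{R}^n\to\mathbb{R}^{n_\flat+n_\sharp}$ and a continuously differentiable $\psi:\mathbb{R}^p\times\mathbb{R}^{n_\sharp}\times\mathbb{R}^r\to\mathbb{R}^{n_\flat}$ such that, with $z=T(x)=(z^\flat,z^\sharp)$, $f_\sharp(z^\sharp,z^\flat,u,w):=T_\sharp(f(T^{-1}(z),u,w))$ and $h_T(z^\sharp,z^\flat,v):=h(T^{-1}(z),v)$, one has $z^\flat=\psi(y,z^\sharp,v)$ whenever $y=h_T(z^\sharp,z^\flat,v)$, and $\partial f_\sharp^i/\partial w\equiv0$ for all $i\in\{1,\dots,n_\sharp\}$. Define the reduced-order system $$z^\sharp_{k+1}=\hat{f}_\sharp(z^\sharp_k,\gamma_k,u_k,v_k):=f_\sharp\big(z^\sharp_k,\psi(\gamma_k,z^\sharp_k,v_k),u_k,w_k\big),\qquad y_k=\hat{h}_T(z^\sharp_k,\gamma_k,v_k):=h_T\big(z^\sharp_k,\psi(\gamma_k,z^\sharp_k,v_k),v_k\big),$$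 with fictitious input $\gamma_k\in\mathbb{R}^p$ (the right-hand side does not depend on $w_k$). Let $\overline{\mathbb{X}}:=T(\mathbb{X})$, $\overline{\mathbb{X}}_\sharp$ its projection onto the $z^\sharp$-coordinates and $\mathbb{Z}_\sharp:=\overline{\mathbb{X}}_\sharp\times\mathbb{Y}\times\mathbb{U}\times\mathbb{V}\times\mathbb{Y}$. If there exist $\beta\in\mathcal{K}_\infty$, $\beta_0\in\mathcal{KL}$ and summable $\mathcal{KL}$-functions $\beta_v,\beta_y,\beta_\gamma$ such that $$\beta(\|z^\sharp_k-\widetilde{z}^\sharp_k\|)\le\sum_{i=1}^k\beta_v(\|v_{k-i}-\widetilde{v}_{k-i}\|,i)+\sum_{i=1}^k\big(\beta_y(\|y_{k-i}-\widetilde{y}_{k-i}\|,i)+\beta_\gamma(\|\gamma_{k-i}-\widetilde{\gamma}_{k-i}\|,i)\big)+\beta_0(\|z^\sharp_0-\widetilde{z}^\sharp_0\|,k)$$ for all $k\ge0$ and any $(\boldsymbol{z}^\sharp,\boldsymbol{\gamma},\boldsymbol{u},\boldsymbol{v},\boldsymbol{y}),(\widetilde{\boldsymbol{z}}^\sharp,\widetilde{\boldsymbol{\gamma}},\boldsymbol{u},\widetilde{\boldsymbol{v}},\widetilde{\boldsymbol{y}})\in\mathbb{Z}_\sharp^\infty$ satisfying the reduced-order system, then the original system is strongly nonlinearly detectable.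
   Context: $\mathcal{K}$, $\mathcal{K}_\infty$, $\mathcal{KL}$ are the usual comparison function classes; a $\mathcal{KL}$-function $\beta$ is summable if there is $\alpha\in\mathcal{K}$ with $\sum_{k\ge0}\beta(r,k)\le\alpha(r)$ for all $r\ge0$. A solution of the original system is a sequence in $\mathbb{Z}^\infty$ satisfying its equations. The original system is strongly nonlinearly detectable if there exist $\alpha\in\mathcal{K}_\infty$, $\alpha_0\in\mathcal{KL}$ and summable $\alpha_v,\alpha_y\in\mathcal{KL}$ such that $\alpha(\|x_k-\widetilde{x}_k\|)\le\alpha_0(\|x_0-\widetilde{x}_0\|,k)+\sum_{i=0}^k(\alpha_v(\|v_{k-i}-\widetilde{v}_{k-i}\|,i)+\alpha_y(\|y_{k-i}-\widetilde{y}_{k-i}\|,i))$ for all $k\ge0$ and all pairs of solutions $(\boldsymbol{x},\boldsymbol{u},\boldsymbol{w},\boldsymbol{v},\boldsymbol{y}),(\widetilde{\boldsymbol{x}},\boldsymbol{u},\widetilde{\boldsymbol{w}},\widetilde{\boldsymbol{v}},\widetilde{\boldsymbol{y}})\in\mathbb{Z}^\infty$. *)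

(* Defs.v *)
(* R : realType, vectors are row vectors 'rV[R]_n
   with the library's (sup-)norm `|.|, products of normed spaces for
   multi-argument maps. *)
From mathcomp Require Import all_boot all_order all_algebra.
From mathcomp Require Import all_classical all_reals all_analysis.
Import numFieldNormedType.Exports.
Set Implicit Arguments. Unset Strict Implicit. Unset Printing Implicit Defensive.
Import Order.TTheory GRing.Theory Num.Theory.
Local Open Scope ring_scope.
Local Open Scope classical_set_scope.

Section Defs.
Variable R : realType.

(** Continuously differentiable: differentiable everywhere, and every
    directional derivative x |-> f'(x) v is continuous (for finite-dimensional
    spaces this is continuity of the derivative x |-> Df(x)). *)
Definition C1 {V W : normedModType R} (f : V -> W) : Prop :=
  (forall x, differentiable f x) /\ (forall v, continuous ('D_v f)).

Definition diffeo {V W : normedModType R} (T : V -> W) (Tinv : W -> V) : Prop :=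
  cancel T Tinv /\ cancel Tinv T /\ C1 T /\ C1 Tinv.

Definition classK (a : R -> R) : Prop :=
  {within [set x : R | 0 <= x], continuous a} /\ a 0 = 0 /\
  (forall s t, 0 <= s -> s < t -> a s < a t).

Definition classKinf (a : R -> R) : Prop :=
  classK a /\ (forall M : R, exists s, 0 <= s /\ M < a s).

Definition classKL (b : R -> R -> R) : Prop :=
  (forall t, 0 <= t -> classK (fun s => b s t)) /\
  (forall s, 0 <= s ->
     (forall t1 t2, 0 <= t1 -> t1 <= t2 -> b s t2 <= b s t1) /\
     (b s t @[t --> +oo] --> 0)).

(** Summable KL function: sum_{k>=0} b(r,k) <= a(r) for some a in K
    (terms are nonnegative, so this is stated via the partial sums). *)
Definition summableKL (b : R -> R -> R) : Prop :=
  classKL b /\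
  exists a, classK a /\
    forall s, 0 <= s -> forall N : nat, \sum_(0 <= k < N) b s k%:R <= a s.

Variables (n m q r p nb ns : nat).

Definition orig_sol (X : set 'rV[R]_n) (U : set 'rV[R]_m) (V : set 'rV[R]_r)
  (Y : set 'rV[R]_p) (f : 'rV[R]_n -> 'rV[R]_m -> 'rV[R]_q -> 'rV[R]_n)
  (h : 'rV[R]_n -> 'rV[R]_r -> 'rV[R]_p)
  (x : nat -> 'rV[R]_n) (u : nat -> 'rV[R]_m) (w : nat -> 'rV[R]_q)
  (v : nat -> 'rV[R]_r) (y : nat -> 'rV[R]_p) : Prop :=
  forall k, X (x k) /\ U (u k) /\ V (v k) /\ Y (y k) /\
    x k.+1 = f (x k) (u k) (w k) /\ y k = h (x k) (v k).

Definition strongly_nl_detectable (X : set 'rV[R]_n) (U : set 'rV[R]_m)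
  (V : set 'rV[R]_r) (Y : set 'rV[R]_p)
  (f : 'rV[R]_n -> 'rV[R]_m -> 'rV[R]_q -> 'rV[R]_n)
  (h : 'rV[R]_n -> 'rV[R]_r -> 'rV[R]_p) : Prop :=
  exists (a : R -> R) (a0 av ay : R -> R -> R),
    classKinf a /\ classKL a0 /\ summableKL av /\ summableKL ay /\
    forall x u w v y xt wt vt yt,
      orig_sol X U V Y f h x u w v y ->
      orig_sol X U V Y f h xt u wt vt yt ->
      forall k : nat,
        a `|x k - xt k| <=
          a0 `|x 0%N - xt 0%N| k%:R +
          \sum_(0 <= i < k.+1)
             (av `|v (k - i)%N - vt (k - i)%N| i%:R +
              ay `|y (k - i)%N - yt (k - i)%N| i%:R).

(** Transformed dynamics. z = T x = (z_flat, z_sharp) = row_mx zb zs. *)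
Definition f_sharp (f : 'rV[R]_n -> 'rV[R]_m -> 'rV[R]_q -> 'rV[R]_n)
  (T : 'rV[R]_n -> 'rV[R]_(nb + ns)) (Tinv : 'rV[R]_(nb + ns) -> 'rV[R]_n)
  (zs : 'rV[R]_ns) (zb : 'rV[R]_nb) (u : 'rV[R]_m) (w : 'rV[R]_q) : 'rV[R]_ns :=
  rsubmx (T (f (Tinv (row_mx zb zs)) u w)).

Definition h_T (h : 'rV[R]_n -> 'rV[R]_r -> 'rV[R]_p)
  (Tinv : 'rV[R]_(nb + ns) -> 'rV[R]_n)
  (zs : 'rV[R]_ns) (zb : 'rV[R]_nb) (v : 'rV[R]_r) : 'rV[R]_p :=
  h (Tinv (row_mx zb zs)) v.

(** Reduced-order system; its right-hand side does not depend on w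
    (by hypothesis), so w is fixed to 0 here. *)
Definition f_hat f T Tinv (psi : 'rV[R]_p -> 'rV[R]_ns -> 'rV[R]_r -> 'rV[R]_nb)
  (zs : 'rV[R]_ns) (g : 'rV[R]_p) (u : 'rV[R]_m) (v : 'rV[R]_r) : 'rV[R]_ns :=
  f_sharp f T Tinv zs (psi g zs v) u 0.

Definition h_hat h Tinv (psi : 'rV[R]_p -> 'rV[R]_ns -> 'rV[R]_r -> 'rV[R]_nb)
  (zs : 'rV[R]_ns) (g : 'rV[R]_p) (v : 'rV[R]_r) : 'rV[R]_p :=
  h_T h Tinv zs (psi g zs v) v.

Definition Xbar_sharp (X : set 'rV[R]_n) (T : 'rV[R]_n -> 'rV[R]_(nb + ns))
  : set 'rV[R]_ns := [set rsubmx (T x) | x in X].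

Definition red_sol X U V Y f h T Tinv psi
  (zs : nat -> 'rV[R]_ns) (g : nat -> 'rV[R]_p) (u : nat -> 'rV[R]_m)
  (v : nat -> 'rV[R]_r) (y : nat -> 'rV[R]_p) : Prop :=
  forall k, Xbar_sharp X T (zs k) /\ Y (g k) /\ U (u k) /\ V (v k) /\ Y (y k) /\
    zs k.+1 = f_hat f T Tinv psi (zs k) (g k) (u k) (v k) /\
    y k = h_hat h Tinv psi (zs k) (g k) (v k).

Definition reduced_detectable X U V Y f h T Tinv psi : Prop :=
  exists (b : R -> R) (b0 bv by_ bg : R -> R -> R),
    classKinf b /\ classKL b0 /\ summableKL bv /\ summableKL by_ /\
    summableKL bg /\
    forall zs g u v y zst gt vt yt,
      red_sol X U V Y f h T Tinv psi zs g u v y ->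
      red_sol X U V Y f h T Tinv psi zst gt u vt yt ->
      forall k : nat,
        b `|zs k - zst k| <=
          \sum_(1 <= i < k.+1) bv `|v (k - i)%N - vt (k - i)%N| i%:R +
          \sum_(1 <= i < k.+1)
             (by_ `|y (k - i)%N - yt (k - i)%N| i%:R +
              bg `|g (k - i)%N - gt (k - i)%N| i%:R) +
          b0 `|zs 0%N - zst 0%N| k%:R.

End Defs.

(* Main.v *)
Require Import Defs.
From mathcomp Require Import all_boot all_order all_algebra.
From mathcomp Require Import all_classical all_reals all_analysis.
From mathcomp Require Import lra.
Import numFieldNormedType.Exports.
Import Order.TTheory GRing.Theory Num.Theory.
Set Implicit Arguments. Unset Strict Implicit.
Local Open Scope ring_scope.
Local Open Scope classical_set_scope.

Section Aux.
Variable R : realType.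

Lemma cont_of_mod (f g : R -> R) :
  (forall s t, `|f s - f t| <= g (s - t)) ->
  (forall e, 0 < e -> exists2 d, 0 < d & forall r, `|r| < d -> g r < e) ->
  continuous f.
Proof.
move=> H1 H2 s; apply/cvgrPdist_lt => e e0.
have [d d0 Hd] := H2 e e0.
near=> t.
apply: le_lt_trans (H1 _ _) _; apply: Hd.
near: t; apply: cvgr_dist_lt d0; exact: cvg_id.
Unshelve. all: by end_near. Qed.

Lemma maxlip (s t d : R) : Num.max 0 (t - d) <= Num.max 0 (s - d) + `|t - s|.
Proof.
rewrite ge_max; apply/andP; split.
  by apply: addr_ge0; [rewrite le_max lexx | exact: normr_ge0].
apply: le_trans (_ : (s - d) + `|t - s| <= _); last first.
  by rewrite lerD2r le_max lexx orbT.
have := ler_norm (t - s); lra.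
Qed.

Lemma maxmono (s t d : R) : s <= t -> Num.max 0 (s - d) <= Num.max 0 (t - d).
Proof.
move=> st; rewrite ge_max le_max lexx /= le_max; apply/orP; right.
by rewrite lerD2r.
Qed.

Lemma LOWER (I : Type) (S : set I) (e psi : I -> R) (D : R) :
  (forall i, S i -> 0 <= e i <= D) -> (forall i, S i -> 0 <= psi i) ->
  (forall s, 0 < s -> exists2 eps, 0 < eps &
       forall i, S i -> s <= e i -> eps <= psi i) ->
  exists a, classKinf a /\ forall i, S i -> a (e i) <= psi i.
Proof.
move=> He Hpsi Hpos.
pose S' (o : option I) := if o is Some i then S i else True.
pose c o := if o is Some i then psi i else 1.
pose d o := if o is Some i then e i else D.
pose E s := [set c o + Num.max 0 (s - d o) | o in S'].
pose h s := inf (E s).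
have c0 o : S' o -> 0 <= c o by case: o => [i /Hpsi|] //=.
have En s : E s !=set0 by exists (c None + Num.max 0 (s - d None)); exists None.
have Elb s : has_lbound (E s).
  exists 0; move=> _ [z Sz <-]; apply: addr_ge0; first exact: c0.
  by rewrite le_max lexx.
have hE s o : S' o -> h s <= c o + Num.max 0 (s - d o).
  by move=> So; apply: (ge_inf (Elb s)); exists o.
have hL s x : (forall o, S' o -> x <= c o + Num.max 0 (s - d o)) -> x <= h s.
  by move=> Hx; apply: lb_le_inf => // _ [z Sz <-]; exact: Hx.
have hmono s t : s <= t -> h s <= h t.
  move=> st; apply: hL => o So; apply: le_trans (hE s o So) _.
  by rewrite lerD2l maxmono.
have hlip s t : h t <= h s + `|t - s|.
  rewrite -lerBlDr; apply: hL => o So; rewrite lerBlDr.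
  apply: le_trans (hE t o So) _; rewrite -addrA lerD2l; exact: maxlip.
have hcont : continuous h.
  apply: (@cont_of_mod h (fun r => `|r|)).
    move=> s t /=; rewrite ler_distl; apply/andP; split.
      by rewrite lerBlDr distrC; exact: hlip.
    exact: hlip.
  by move=> e0 e0p; exists e0.
have hpos t : 0 < t -> 0 < h t.
  move=> t0; have t20 : 0 < t / 2 by rewrite divr_gt0.
  have [eps eps0 Heps] := Hpos _ t20.
  pose m := Num.min 1 (Num.min eps (t / 2)).
  have m0 : 0 < m by rewrite /m !lt_min ltr01 eps0 t20.
  apply: lt_le_trans m0 _; apply: hL => -[i Si|_] /=; last first.
    apply: le_trans (_ : 1 <= _); first by rewrite /m ge_min lexx.
    by rewrite lerDl le_max lexx.
  have [ti|ti] := leP (t / 2) (e i).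
    apply: le_trans (_ : eps <= _); first by rewrite /m !ge_min lexx orbT.
    apply: le_trans (Heps _ Si ti) _; rewrite lerDl le_max lexx //.
  apply: le_trans (_ : t / 2 <= _); first by rewrite /m !ge_min lexx !orbT.
  apply: le_trans (_ : t - e i <= _); first by lra.
  apply: le_trans (_ : Num.max 0 (t - e i) <= _); first by rewrite le_max lexx orbT.
  by rewrite lerDr; apply: Hpsi.
have hreal i : S i -> h (e i) <= psi i.
  move=> Si; apply: le_trans (hE _ (Some i) Si) _ => /=.
  by rewrite subrr maxxx addr0.
have hbig s : D <= s -> s - D <= h s.
  move=> Ds; apply: hL => -[i Si|_] /=.
    have /andP[_ eD] := He _ Si; have := Hpsi _ Si.
    have : s - e i <= Num.max 0 (s - e i) by rewrite le_max lexx orbT.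
    lra.
  have : s - D <= Num.max 0 (s - D) by rewrite le_max lexx orbT.
  lra.
have h0 s : 0 <= h s by apply: hL => o So; apply: addr_ge0; [exact: c0| rewrite le_max lexx].
pose k (s : R) := s / (1 + `|s|).
have kcont : continuous k.
  move=> s; apply: (@continuousM _ _ (fun x : R => x) (fun x : R => (1 + `|x|)^-1)).
    exact: cvg_id.
  apply: continuousV; first by rewrite gt_eqF // ltr_pwDl.
  apply: cvgD; first exact: cvg_cst.
  exact: (@norm_continuous _ R^o).
have kmono s t : 0 <= s -> s < t -> k s < k t.
  move=> s0 st; rewrite /k !ger0_norm //; last by lra.
  rewrite ltr_pdivrMr; last by lra.
  rewrite mulrAC ltr_pdivlMr; last by lra.
  nra.
have k0 s : 0 <= s -> 0 <= k s.
  by move=> s0; rewrite /k divr_ge0 // addr_ge0.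
exists (fun s => h s * k s); split; last first.
  move=> i Si; apply: le_trans (hreal _ Si).
  have /andP[e0 _] := He _ Si.
  rewrite ler_piMr //; rewrite /k ger0_norm // ler_pdivrMr; last by lra.
  lra.
split; first split.
- apply: continuous_subspaceT => s; apply: continuousM; [exact: hcont|exact: kcont].
- split; first by rewrite /k normr0 mul0r mulr0.
  move=> s t s0 st.
  apply: le_lt_trans (_ : h t * k s < _).
    by rewrite ler_wpM2r // ?k0 // hmono // ltW.
  by rewrite ltr_pM2l ?kmono // hpos //; lra.
- move=> M; pose s := 2 * `|M| + `|D| + 2.
  have sD : D <= s by rewrite /s; have := ler_norm D; have := normr_ge0 M; lra.
  have s1 : 1 <= s by rewrite /s; have := normr_ge0 D; have := normr_ge0 M; lra.
  exists s; split; first by lra.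
  have ks : 1 / 2 <= k s.
    rewrite /k ger0_norm; last by lra.
    rewrite ler_pdivlMr; last by lra.
    rewrite mulrAC ler_pdivrMr; last by lra.
    lra.
  have := hbig _ sD; have := ler_norm M; have := normr_ge0 D.
  move=> h1 h2 h3; have sdef : s = 2 * `|M| + `|D| + 2 by []; have := ler_norm D => h4.
  apply: lt_le_trans (_ : (s - D) * (1 / 2) <= _); first by lra.
  by apply: ler_pM => //; lra.
Qed.


Lemma min1_sub (a b c : R) : 0 <= a -> 0 <= b -> c <= a + b ->
  Num.min 1 c <= Num.min 1 a + Num.min 1 b.
Proof.
move=> a0 b0 cab.
have m0 (x : R) : 0 <= x -> 0 <= Num.min 1 x by move=> x0; rewrite le_min ler01 x0.
have mc : Num.min 1 c <= 1 by rewrite ge_min lexx.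
have mc' : Num.min 1 c <= c by rewrite ge_min lexx orbT.
have ma := m0 a a0; have mb := m0 b b0.
have [a1|a1] := leP 1 a.
  have : 1 <= Num.min 1 a by rewrite le_min lexx a1.
  lra.
have [b1|b1] := leP 1 b.
  have : 1 <= Num.min 1 b by rewrite le_min lexx b1.
  lra.
have : a <= Num.min 1 a by rewrite le_min lexx ltW.
have : b <= Num.min 1 b by rewrite le_min lexx ltW.
lra.
Qed.

Lemma UPPER (I : Type) (S : set I) (d phi : I -> R) (B : R) :
  0 <= B ->
  (forall i, S i -> 0 <= d i) -> (forall i, S i -> 0 <= phi i <= B) ->
  (forall i, S i -> d i = 0 -> phi i = 0) ->
  (forall eps, 0 < eps -> exists2 del, 0 < del &
       forall i, S i -> d i < del -> phi i < eps) ->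
  exists w : R -> R, continuous w /\ w 0 = 0 /\
    (forall s t, 0 <= s -> s <= t -> w s <= w t) /\ (forall s, 0 <= w s) /\
    forall i, S i -> phi i <= w (d i).
Proof.
move=> B0 Hd Hphi Hd0 Hunif.
pose S' (z : option I) := if z is Some i then S i else True.
pose term z (s : R) := if z is Some i then phi i * Num.min 1 (`|s| / d i) else 0.
pose W s := [set term z s | z in S'].
pose w s := sup (W s).
have m0 (x : R) : 0 <= x -> 0 <= Num.min 1 x by move=> x0; rewrite le_min ler01 x0.
have m1 (x : R) : Num.min 1 x <= 1 by rewrite ge_min lexx.
have tB z s : S' z -> 0 <= term z s <= B.
  case: z => [i Si|_] /=; last by rewrite lexx.
  have /andP[p0 pB] := Hphi _ Si.
  rewrite mulr_ge0 ?m0 ?divr_ge0 ?Hd //=.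
  apply: le_trans pB; rewrite ler_piMr //.
have Wn s : W s !=set0 by exists 0; exists None.
have Wub s : has_ubound (W s).
  by exists B; move=> _ [z Sz <-]; have /andP[] := tB z s Sz.
have wU s z : S' z -> term z s <= w s.
  by move=> Sz; apply: (ub_le_sup (Wub s)); exists z.
have wL s x : (forall z, S' z -> term z s <= x) -> w s <= x.
  by move=> Hx; apply: ge_sup => // _ [z Sz <-]; exact: Hx.
have w0 s : 0 <= w s by apply: (wU s None).
have wN s : w (- s) = w s.
  by rewrite /w /W; congr sup; apply: eq_imagel => z _; case: z => //= i; rewrite normrN.
have wsub s t : w t <= w s + w (t - s).
  apply: wL => z Sz; apply: le_trans (_ : term z s + term z (t - s) <= _); last first.
    by apply: lerD; apply: wU.
  case: z Sz => [i Si|_] /=; last by rewrite addr0.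
  have /andP[p0 _] := Hphi _ Si.
  rewrite -mulrDr ler_wpM2l //; apply: min1_sub.
  - by rewrite divr_ge0 ?Hd.
  - by rewrite divr_ge0 ?Hd.
  rewrite -mulrDl ler_wpM2r ?invr_ge0 ?Hd //.
  by have := ler_normD s (t - s); rewrite addrC subrK addrC.
have wmono s t : 0 <= s -> s <= t -> w s <= w t.
  move=> s0 st; apply: wL => z Sz; apply: le_trans (wU t z Sz).
  case: z Sz => [i Si|_] //=.
  have /andP[p0 _] := Hphi _ Si.
  rewrite ler_wpM2l // le_min m1 /= ge_min; apply/orP; right.
  rewrite ler_wpM2r ?invr_ge0 ?Hd // !ger0_norm //; exact: le_trans st.
have wsmall e : 0 < e -> exists2 dl, 0 < dl & forall r, `|r| < dl -> w r < e.
  move=> e0; have e20 : 0 < e / 2 by rewrite divr_gt0.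
  have [del del0 Hdel] := Hunif _ e20.
  exists (e * del / (2 * (B + 1))).
    by rewrite divr_gt0 ?mulr_gt0 //; lra.
  move=> r hr.
  have key : B * `|r| / del < e / 2.
    move: hr; rewrite ltr_pdivlMr; last by lra.
    move=> hr; rewrite ltr_pdivrMr //; have := normr_ge0 r; nra.
  have kb : 0 <= B * `|r| / del by apply: divr_ge0; [apply: mulr_ge0|lra].
  apply: (@le_lt_trans _ _ (e / 2 + B * `|r| / del)); last by lra.
  apply: wL => -[i Si|_] /=; last by lra.
  have /andP[p0 pB] := Hphi _ Si.
  have [di|di] := ltP (d i) del.
    have := Hdel _ Si di.
    have : phi i * Num.min 1 (`|r| / d i) <= phi i by rewrite ler_piMr.
    lra.
  suff : phi i * Num.min 1 (`|r| / d i) <= B * `|r| / del by lra.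
  have dpos : 0 < d i by apply: lt_le_trans del0 di.
  apply: (@le_trans _ _ (phi i * (`|r| / d i))).
    by rewrite ler_wpM2l // ge_min lexx orbT.
  rewrite -mulrA ler_pM //; first by apply: divr_ge0; [exact: normr_ge0 | exact: ltW].
  rewrite ler_pdivrMr // mulrAC ler_pdivlMr // ler_wpM2l //.
exists w; split; [|split; [|split; [exact: wmono|split; [exact: w0|]]]].
- apply: (@cont_of_mod w w) => [s t|]; last exact: wsmall.
  rewrite ler_distl; apply/andP; split.
    rewrite lerBlDr; have := wsub s t; rewrite -opprB wN addrC //.
  exact: wsub.
- apply/eqP; rewrite eq_le w0 andbT; apply: wL => -[i Si|_] //=.
  by rewrite normr0 mul0r (min_r ler01) mulr0.
- move=> i Si; apply: le_trans (wU _ (Some i) Si) => /=.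
  have [d0|d0] := eqVneq (d i) 0.
    by rewrite (Hd0 _ Si d0) mul0r.
  rewrite ger0_norm ?Hd // divff // minxx mulr1 //.
Qed.

Lemma wconst (q k : nat) (F : 'rV[R]_q -> 'rV[R]_k) :
  (forall w, differentiable F w) -> (forall w dw, 'D_dw F w = 0) ->
  forall w, F w = F 0.
Proof.
move=> dF DF w.
pose g (t : R) := t *: w.
pose phi := F \o g.
have dg t : differentiable g t by exact: ex_diff.
have dphi : forall t, differentiable phi t.
  by move=> t0; apply: differentiable_comp; [exact: dg | exact: dF].
have Dphi t : 'D_1 phi t = 0.
  rewrite (deriveE _ (dphi t)) (diff_comp (dg t) (dF _)).
  have -> : ('d g t : R -> _) = ( *:%R ^~ w) by apply: diff_val.
  rewrite /= scale1r.
  by rewrite -deriveE ?DF //; exact: dF.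
apply/rowP => j.
have := @is_derive_0_is_cst R (fun t => phi t ord0 j) 1 0.
rewrite /phi /g /= scale1r scale0r; apply => t.
have dv : derivable phi t 1 by apply: diff_derivable.
split.
  by move: dv => /derivable_mxP; apply.
have := derive_mx dv.
rewrite Dphi => /matrixP /(_ ord0 j); rewrite !mxE => H.
by rewrite -H.
Qed.

Definition weakKL (e : R -> R -> R) :=
  (forall t, 0 <= t -> {within [set x | 0 <= x], continuous (fun s => e s t)} /\
     e 0 t = 0 /\ (forall s s', 0 <= s -> s <= s' -> e s t <= e s' t)) /\
  (forall s, 0 <= s -> (forall t1 t2, 0 <= t1 -> t1 <= t2 -> e s t2 <= e s t1) /\
     e s t @[t --> +oo] --> 0).

Lemma K_le (a : R -> R) s s' : classK a -> 0 <= s -> s <= s' -> a s <= a s'.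
Proof.
move=> [_ [_ Ha]] s0; rewrite le_eqVlt => /orP[/eqP -> //|ss].
exact/ltW/Ha.
Qed.

Lemma K_ge0 (a : R -> R) s : classK a -> 0 <= s -> 0 <= a s.
Proof. by move=> Ka s0; have := @K_le a 0 s Ka (lexx 0) s0; rewrite (proj1 (proj2 Ka)). Qed.

Lemma KL_ge0 (b : R -> R -> R) s t : classKL b -> 0 <= s -> 0 <= t -> 0 <= b s t.
Proof. by move=> [Kb _] s0 t0; apply: (@K_ge0 (fun x => b x t)) => //; exact: Kb. Qed.

Lemma KL_weak (b : R -> R -> R) : classKL b -> weakKL b.
Proof.
move=> [Kb Lb]; split => [t t0|s s0]; last exact: Lb.
have [c [b0 m]] := Kb t t0; split => //; split => // s s' s0 ss.
by apply: (@K_le (fun s => b s t)) => //; exact: Kb.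
Qed.

Lemma within_add (f g : R -> R) :
  {within [set x | 0 <= x], continuous f} -> {within [set x | 0 <= x], continuous g} ->
  {within [set x | 0 <= x], continuous (fun s => f s + g s)}.
Proof.
move=> /subspace_continuousP cf /subspace_continuousP cg.
by apply/subspace_continuousP => x Ax; apply: cvgD; [exact: cf| exact: cg].
Qed.

Lemma KL_addw (b e : R -> R -> R) : classKL b -> weakKL e -> classKL (fun s t => b s t + e s t).
Proof.
move=> [Kb Lb] [We Le]; split => [t t0|s s0].
  have [cb [b0 sb]] := Kb t t0; have [ce [e0 me]] := We t t0.
  split; first exact: within_add.
  split; first by rewrite b0 e0 addr0.
  move=> s s' s0 ss; apply: ltr_leD; first exact: sb.
  by apply: me => //; exact: ltW.
have [mb cb] := Lb s s0; have [me ce] := Le s s0.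
split; first by move=> t1 t2 t0 tt; apply: lerD; [exact: mb| exact: me].
by rewrite -[0]addr0; apply: cvgD.
Qed.

Lemma K_add (a1 a2 : R -> R) : classK a1 -> classK a2 -> classK (fun s => a1 s + a2 s).
Proof.
move=> [c1 [z1 s1]] [c2 [z2 s2]]; split; first exact: within_add.
split; first by rewrite z1 z2 addr0.
by move=> s t s0 st; apply: ltrD; [exact: s1| exact: s2].
Qed.

Lemma summable_addw (b e : R -> R -> R) : summableKL b -> weakKL e ->
  (exists a', classK a' /\ forall s, 0 <= s -> forall N : nat,
       \sum_(0 <= k < N) e s k%:R <= a' s) ->
  summableKL (fun s t => b s t + e s t).
Proof.
move=> [KLb [a [Ka Ha]]] We [a' [Ka' Ha']]; split; first exact: KL_addw.
exists (fun s => a s + a' s); split; first exact: K_add.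
by move=> s s0 N; rewrite big_split /=; apply: lerD; [exact: Ha| exact: Ha'].
Qed.

Lemma summable_add (b1 b2 : R -> R -> R) : summableKL b1 -> summableKL b2 ->
  summableKL (fun s t => b1 s t + b2 s t).
Proof.
move=> S1 [KL2 [a [Ka Ha]]]; apply: summable_addw => //; first exact: KL_weak.
by exists a.
Qed.

Definition c1 (t : R) := Num.max 0 (1 - t).

Lemma sum_c1 N : \sum_(0 <= k < N) c1 k%:R <= 1.
Proof.
case: N => [|N]; first by rewrite big_geq.
rewrite big_nat_recl // big1 => [|i _].
  by rewrite /c1 subr0 addr0 ge_max ler01 lexx.
by apply/eqP; rewrite /c1 eq_le ge_max lexx /= le_max lexx /= subr_le0 ler1n.
Qed.

Lemma weak_aug (kap : R -> R) : classK kap -> weakKL (fun s t => kap s * c1 t).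
Proof.
move=> Kk; have [ck [k0 sk]] := Kk; split => [t t0|s s0].
  split.
    move/subspace_continuousP : ck => ck.
    by apply/subspace_continuousP => x Ax; apply: (cvgMr_tmp (b := c1 t) (ck x Ax)).
  split; first by rewrite k0 mul0r.
  move=> s s' s0 ss; apply: ler_wpM2r; first by rewrite le_max lexx.
  exact: K_le.
split.
  move=> t1 t2 t0 tt; apply: ler_wpM2l; first exact: K_ge0.
  by rewrite /c1 ge_max !le_max lexx /= lerD2l lerN2 tt orbT.
rewrite -[0](mulr0 (kap s)); apply: (@cvgMl_tmp _ _ _ _ c1 (kap s) 0).
apply: cvg_near_cst; near=> t.
have t1 : 1 <= t by near: t; apply: nbhs_pinfty_ge; exact: num_real.
apply/eqP; rewrite /c1 eq_le ge_max !le_max lexx /= subr_le0 t1.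
Unshelve. all: by end_near. Qed.

Lemma summable_aug (b : R -> R -> R) (kap : R -> R) : summableKL b -> classK kap ->
  summableKL (fun s t => b s t + kap s * c1 t).
Proof.
move=> Sb Kk; apply: summable_addw => //; first exact: weak_aug.
exists kap; split => // s s0 N; rewrite -mulr_sumr.
rewrite -[leRHS]mulr1 ler_wpM2l ?sum_c1 //; exact: K_ge0.
Qed.

Lemma within_comp (f g : R -> R) : continuous g -> (forall s, 0 <= g s) ->
  {within [set x | 0 <= x], continuous f} -> continuous (f \o g).
Proof.
move=> cg g0 /subspace_continuousP cf s.
apply: cvg_comp (cf (g s) (g0 s)).
move=> P /=; rewrite /within => HP.
move: (cg s _ HP); apply: (filterS (F := nbhs s)) => y /= Hy; exact: Hy (g0 y).
Qed.

End Aux.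

Lemma cont_fst {A B : topologicalType} : continuous (fun p : A * B => p.1).
Proof. by move=> [a b]; exact: cvg_fst. Qed.
Lemma cont_snd {A B : topologicalType} : continuous (fun p : A * B => p.2).
Proof. by move=> [a b]; exact: cvg_snd. Qed.
Lemma cont_normB {R : realType} {T : topologicalType} {V : normedModType R} (f g : T -> V) :
  continuous f -> continuous g -> continuous (fun x => `|f x - g x|).
Proof. by move=> cf cg x; apply: cvg_norm; apply: cvgB; [exact: cf|exact: cg]. Qed.

Unset Implicit Arguments.
Set Strict Implicit.

Theorem lemma3 (R : realType) (n m q r p nb ns : nat)
  (X : set 'rV[R]_n) (U : set 'rV[R]_m) (V : set 'rV[R]_r) (Y : set 'rV[R]_p)
  (f : 'rV[R]_n -> 'rV[R]_m -> 'rV[R]_q -> 'rV[R]_n)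
  (h : 'rV[R]_n -> 'rV[R]_r -> 'rV[R]_p)
  (T : 'rV[R]_n -> 'rV[R]_(nb + ns)) (Tinv : 'rV[R]_(nb + ns) -> 'rV[R]_n)
  (psi : 'rV[R]_p -> 'rV[R]_ns -> 'rV[R]_r -> 'rV[R]_nb) :
  compact X -> compact V -> compact Y ->
  C1 (fun xuw : 'rV[R]_n * 'rV[R]_m * 'rV[R]_q => f xuw.1.1 xuw.1.2 xuw.2) ->
  C1 (fun xv : 'rV[R]_n * 'rV[R]_r => h xv.1 xv.2) ->
  diffeo T Tinv ->
  C1 (fun ysv : 'rV[R]_p * 'rV[R]_ns * 'rV[R]_r => psi ysv.1.1 ysv.1.2 ysv.2) ->
  (forall (zs : 'rV[R]_ns) (zb : 'rV[R]_nb) (v : 'rV[R]_r) (y : 'rV[R]_p),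
      y = h_T h Tinv zs zb v -> zb = psi y zs v) ->
  (forall (zs : 'rV[R]_ns) (zb : 'rV[R]_nb) (u : 'rV[R]_m) (w dw : 'rV[R]_q),
      'D_dw (fun w' => f_sharp f T Tinv zs zb u w') w = 0) ->
  reduced_detectable X U V Y f h T Tinv psi ->
  strongly_nl_detectable X U V Y f h.
Proof.
move=> cX cV cY [df _] [dh _] [TK [TinvK [[dT _] _]]] _ Hpsi Hw.
move=> [b [b0 [bv [by_ [bg [Kb [KLb0 [Sbv [Sby [Sbg Hred]]]]]]]]]].
pose G x := rsubmx (T x).
have cG : continuous G.
  move=> x; apply: (continuous_comp (differentiable_continuous (dT x))).
  exact: continuous_rsubmx.
have ch : continuous (fun xv : 'rV[R]_n * 'rV[R]_r => h xv.1 xv.2).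
  by move=> xv; apply: differentiable_continuous; exact: dh.
have Fw zs zb u w : f_sharp f T Tinv zs zb u w = f_sharp f T Tinv zs zb u 0.
  apply: (@wconst R q ns (fun w' => f_sharp f T Tinv zs zb u w')); last exact: Hw.
  move=> w'; rewrite /f_sharp.
  apply: (differentiable_comp (f := fun w' => T (f (Tinv (row_mx zb zs)) u w'))).
    apply: (differentiable_comp (f := fun w' => f (Tinv (row_mx zb zs)) u w')); last exact: dT.
    apply: (differentiable_comp (f := fun w' : 'rV[R]_q => (Tinv (row_mx zb zs), u, w'))
      (g := fun xuw : 'rV[R]_n * 'rV[R]_m * 'rV[R]_q => f xuw.1.1 xuw.1.2 xuw.2)); last exact: df.
    apply: differentiable_pair => //.
  exact: differentiable_rsubmx.
have recon x v : lsubmx (T x) = psi (h x v) (G x) v.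
  by apply: Hpsi; rewrite /h_T hsubmxK TK.
have xeq x x' v v' : G x = G x' -> h x v = h x' v' -> v = v' -> x = x'.
  move=> Gx hx vv; rewrite -(TK x) -(TK x') -(hsubmxK (T x)) -(hsubmxK (T x')).
  by rewrite (recon x v) (recon x' v') -/(G x) -/(G x') Gx hx vv.
have red x u w v y : orig_sol X U V Y f h x u w v y ->
    red_sol X U V Y f h T Tinv psi (fun k => G (x k)) y u v y.
  move=> sol k; have [Xx [Uu [Vv [Yy [xS yE]]]]] := sol k.
  split; first by exists (x k).
  do 4!(split => //).
  split.
    rewrite /f_hat -(Fw _ _ _ (w k)) /f_sharp xS yE -recon hsubmxK TK //.
  by rewrite /h_hat /h_T yE -recon hsubmxK TK.
have [MX MX0 HMX] : exists2 M : R, 0 <= M & forall x, X x -> `|x| <= M.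
  move: cX => /compact_bounded/ex_strict_bound_gt0 [M M0 HM].
  by exists M; [exact: ltW| move=> x Xx; apply: ltW; exact: HM].
have [Kb0 [Kb0s Kbs]] := Kb.1.
have bge0 s : 0 <= s -> 0 <= b s by move=> s0; exact: K_ge0 Kb.1 s0.
have ble s s' : 0 <= s -> s <= s' -> b s <= b s' by move=> s0 ss; exact: K_le Kb.1 s0 ss.
pose I := (('rV[R]_n * 'rV[R]_r) * ('rV[R]_n * 'rV[R]_r))%type.
pose S := ((X `*` V) `*` (X `*` V)) : set I.
pose e (i : I) := `|i.1.1 - i.2.1|.
pose nz (i : I) := `|G i.1.1 - G i.2.1|.
pose ny (i : I) := `|h i.1.1 i.1.2 - h i.2.1 i.2.2|.
pose nv (i : I) := `|i.1.2 - i.2.2|.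
pose ps (i : I) := b (nz i) + b (ny i) + b (nv i).
have cS : compact S by apply: compact_setX; apply: compact_setX.
have ce : continuous e.
  apply: cont_normB => i.
    exact: (continuous_comp (@cont_fst _ _ i) (@cont_fst _ _ _)).
  exact: (continuous_comp (@cont_snd _ _ i) (@cont_fst _ _ _)).
have cF : continuous (fun i => nz i + ny i + nv i).
  move=> i; apply: cvgD; first apply: cvgD.
  - apply: (@cont_normB R I _ (fun i : I => G i.1.1) (fun i : I => G i.2.1)) => j.
      exact: (continuous_comp (continuous_comp (@cont_fst _ _ j) (@cont_fst _ _ _)) (cG _)).
    exact: (continuous_comp (continuous_comp (@cont_snd _ _ j) (@cont_fst _ _ _)) (cG _)).
  - apply: (@cont_normB R I _ (fun i : I => h i.1.1 i.1.2) (fun i : I => h i.2.1 i.2.2)) => j.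
      exact: (continuous_comp (@cont_fst _ _ j) (ch _)).
    exact: (continuous_comp (@cont_snd _ _ j) (ch _)).
  - apply: (@cont_normB R I _ (fun i : I => i.1.2) (fun i : I => i.2.2)) => j.
      exact: (continuous_comp (@cont_fst _ _ j) (@cont_snd _ _ _)).
    exact: (continuous_comp (@cont_snd _ _ j) (@cont_snd _ _ _)).
have nz0 i : 0 <= nz i by apply: normr_ge0.
have ny0 i : 0 <= ny i by apply: normr_ge0.
have nv0 i : 0 <= nv i by apply: normr_ge0.
have Hpos : forall s, 0 < s -> exists2 eps, 0 < eps &
    forall i, S i -> s <= e i -> eps <= ps i.
  move=> s s0.
  pose C := S `&` (e @^-1` [set x | s <= x]).
  have [[c0 Cc0]|C0] := pselect (C !=set0); last first.
    exists 1 => // i Si si; exfalso; apply: C0; exists i; split => //.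
  have cC : compact C.
    apply: compact_closedI => //; apply: preimage_closed => [x _|]; [exact: ce| exact: closed_ge].
  have [c /set_mem [Sc sc] Hc] := compact_EVT_min (ex_intro _ c0 Cc0) cC
      (continuous_subspaceT cF).
  pose Fc := nz c + ny c + nv c.
  have Fc0 : 0 < Fc.
    rewrite lt_neqAle; apply/andP; split; last by rewrite /Fc !addr_ge0.
    apply/negP => /eqP F0.
    have hz : nz c = 0 by have := nz0 c; have := ny0 c; have := nv0 c; rewrite /Fc in F0; lra.
    have hy : ny c = 0 by have := nz0 c; have := ny0 c; have := nv0 c; rewrite /Fc in F0; lra.
    have hv : nv c = 0 by have := nz0 c; have := ny0 c; have := nv0 c; rewrite /Fc in F0; lra.
    move: hz hy hv; rewrite /nz /ny /nv => /normr0_eq0/eqP; rewrite subr_eq0 => /eqP hz.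
    move=> /normr0_eq0/eqP; rewrite subr_eq0 => /eqP hy.
    move=> /normr0_eq0/eqP; rewrite subr_eq0 => /eqP hv.
    have := xeq _ _ _ _ hz hy hv; move: sc; rewrite /e /= => sc ce0.
    by move: sc; rewrite ce0 subrr normr0; lra.
  exists (b (Fc / 3)).
    by rewrite -Kb0s; apply: Kbs => //; lra.
  move=> i Si si.
  have := Hc i (mem_set (conj Si si)); rewrite -/Fc => Fci.
  have bz := bge0 _ (nz0 i); have by0 := bge0 _ (ny0 i); have bv0 := bge0 _ (nv0 i).
  rewrite /ps.
  have [h1|h1] := leP (Fc / 3) (nz i).
    have := ble _ _ (ltW (divr_gt0 Fc0 (ltr0Sn _ 2))) h1; lra.
  have [h2|h2] := leP (Fc / 3) (ny i).
    have := ble _ _ (ltW (divr_gt0 Fc0 (ltr0Sn _ 2))) h2; lra.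
  have h3 : Fc / 3 <= nv i by lra.
  have := ble _ _ (ltW (divr_gt0 Fc0 (ltr0Sn _ 2))) h3; lra.
have [a [Ka Ha]] : exists a, classKinf a /\ forall i, S i -> a (e i) <= ps i.
  apply: (@LOWER R I S e ps (MX + MX)) => //.
    move=> i [[Xi _] [Xi' _]]; rewrite /e normr_ge0 /=.
    apply: le_trans (ler_normB _ _) _; apply: lerD; exact: HMX.
  by move=> i _; rewrite /ps !addr_ge0 // bge0.
have [MG MG0 HMG] : exists2 M : R, 0 <= M & forall x, X x -> `|G x| <= M.
  have : compact (G @` X) by apply: continuous_compact => //; exact: continuous_subspaceT.
  move=> /compact_bounded/ex_strict_bound_gt0 [M M0 HM].
  by exists M; [exact: ltW| move=> x Xx; apply: ltW; apply: HM; exists x].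
pose I2 := ('rV[R]_n * 'rV[R]_n)%type.
pose S2 := (X `*` X) : set I2.
pose d2 (i : I2) := `|i.1 - i.2|.
pose ph (i : I2) := `|G i.1 - G i.2|.
have cS2 : compact S2 by apply: compact_setX.
have cd2 : continuous d2 by apply: cont_normB; [exact: cont_fst| exact: cont_snd].
have cph : continuous ph.
  apply: (@cont_normB R I2 _ (fun i : I2 => G i.1) (fun i : I2 => G i.2)) => j.
    exact: (continuous_comp (@cont_fst _ _ j) (cG _)).
  exact: (continuous_comp (@cont_snd _ _ j) (cG _)).
have [om [com [om0 [ommono [omge0 Hom]]]]] : exists w : R -> R, continuous w /\ w 0 = 0 /\
    (forall s t, 0 <= s -> s <= t -> w s <= w t) /\ (forall s, 0 <= w s) /\
    forall i, S2 i -> ph i <= w (d2 i).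
  apply: (@UPPER R I2 S2 d2 ph (MG + MG)).
  - by rewrite addr_ge0.
  - by move=> i _; exact: normr_ge0.
  - move=> i [Xi Xi']; rewrite /ph normr_ge0 /=.
    apply: le_trans (ler_normB _ _) _; apply: lerD; exact: HMG.
  - move=> i _; rewrite /d2 /ph => /normr0_eq0/eqP; rewrite subr_eq0 => /eqP ->.
    by rewrite subrr normr0.
  move=> eps eps0.
  pose C := S2 `&` (ph @^-1` [set x | eps <= x]).
  have [[c0 Cc0]|C0] := pselect (C !=set0); last first.
    exists 1 => // i Si _; rewrite ltNge; apply/negP => ei.
    by apply: C0; exists i; split.
  have cC : compact C.
    apply: compact_closedI => //; apply: preimage_closed => [x _|]; [exact: cph| exact: closed_ge].
  have [c /set_mem [Sc sc] Hc] := compact_EVT_min (ex_intro _ c0 Cc0) cC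
      (continuous_subspaceT cd2).
  exists (d2 c).
    rewrite lt_neqAle normr_ge0 andbT; apply/negP => /eqP/esym/normr0_eq0/eqP.
    rewrite subr_eq0 => /eqP c12; move: sc; rewrite /= /ph c12 subrr normr0; lra.
  move=> i Si di; rewrite ltNge; apply/negP => ei.
  have := Hc i (mem_set (conj Si ei)); lra.
have [KLb0K KLb0L] := KLb0.
have c10 : c1 (0 : R) = 1 by rewrite /c1 subr0 (max_r ler01).
have c1ge0 (t : R) : 0 <= c1 t by rewrite /c1 le_max lexx.
exists a, (fun s t => s * b0 1 t + b0 (om s) t),
  (fun s t => bv s t + b s * c1 t), (fun s t => (by_ s t + bg s t) + b s * c1 t).
split => //; split.
  apply: KL_addw.
    split => [t t0|s s0].
      have [_ [Kt0 Kts]] := KLb0K t t0.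
      have c0 : 0 < b0 1 t by rewrite -Kt0; apply: Kts => //; exact: ltr01.
      split.
        by apply: continuous_subspaceT => x; apply: (cvgMr_tmp (b := b0 1 t)); exact: cvg_id.
      split; first by rewrite mul0r.
      by move=> s s' s0 ss; rewrite ltr_pM2r.
    have [Lm Ll] := KLb0L 1 ler01.
    split; first by move=> t1 t2 t0 tt; apply: ler_wpM2l => //; exact: Lm.
    by rewrite -[0](mulr0 s); apply: (@cvgMl_tmp _ _ _ _ (b0 1) s 0).
  split => [t t0|s s0].
    have Kt := KLb0K t t0; have [Kc [Kt0 _]] := Kt.
    split.
      apply: continuous_subspaceT.
      exact: (@within_comp R (fun x => b0 x t) om com omge0 Kc).
    split; first by rewrite om0.
    by move=> s s' s0 ss; apply: (@K_le R (fun x => b0 x t)) => //; apply: ommono.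
  exact: KLb0L.
split; first exact: summable_aug Sbv Kb.1.
split; first exact: summable_aug (summable_add Sby Sbg) Kb.1.
move=> x u w v y xt wt vt yt sol1 sol2 k.
have Hk := Hred _ _ _ _ _ _ _ _ _ (red _ _ _ _ _ sol1) (red _ _ _ _ _ sol2) k.
move: Hk => /= Hk.
have [Xk [_ [Vk [_ [_ yk]]]]] := sol1 k.
have [Xtk [_ [Vtk [_ [_ ytk]]]]] := sol2 k.
have Hak := Ha ((x k, v k), (xt k, vt k)) (conj (conj Xk Vk) (conj Xtk Vtk)).
move: Hak; rewrite /ps /nz /ny /nv /e /= -yk -ytk => Hak.
have [X0 _] := sol1 0%N; have [Xt0 _] := sol2 0%N.
have Hom0 := Hom (x 0%N, xt 0%N) (conj X0 Xt0); move: Hom0; rewrite /ph /d2 /= => Hom0.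
have B0 : b0 `|G (x 0%N) - G (xt 0%N)| k%:R <= b0 (om `|x 0%N - xt 0%N|) k%:R.
  by apply: (@K_le R (fun s => b0 s k%:R)) => //; apply: KLb0K; exact: ler0n.
have P0 : 0 <= `|x 0%N - xt 0%N| * b0 1 k%:R.
  by apply: mulr_ge0 => //; apply: KL_ge0 => //; exact: ler0n.
rewrite big_ltn // subn0.
set SV := \sum_(1 <= i < k.+1) bv _ _ in Hk.
set SY := \sum_(1 <= i < k.+1) _ in Hk.
have Hsum : SV + SY <= \sum_(1 <= i < k.+1)
    ((bv `|v (k - i)%N - vt (k - i)%N| i%:R + b `|v (k - i)%N - vt (k - i)%N| * c1 i%:R) +
     ((by_ `|y (k - i)%N - yt (k - i)%N| i%:R + bg `|y (k - i)%N - yt (k - i)%N| i%:R) +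
      b `|y (k - i)%N - yt (k - i)%N| * c1 i%:R)).
  rewrite /SV /SY -big_split /=; apply: ler_sum => i _.
  have := mulr_ge0 (bge0 _ (normr_ge0 (v (k - i)%N - vt (k - i)%N))) (c1ge0 i%:R).
  have := mulr_ge0 (bge0 _ (normr_ge0 (y (k - i)%N - yt (k - i)%N))) (c1ge0 i%:R).
  lra.
rewrite c10 !mulr1.
have := KL_ge0 Sbv.1 (normr_ge0 (v k - vt k)) (lexx (0 : R)).
have := KL_ge0 Sby.1 (normr_ge0 (y k - yt k)) (lexx (0 : R)).
have := KL_ge0 Sbg.1 (normr_ge0 (y k - yt k)) (lexx (0 : R)).
move: Hk Hak Hsum B0 P0; rewrite /SV /SY /G.
lra.
Qed.
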